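(* In the standing setting, let $(A,B,R,\sigma)$ be a context with associated Boolean relation $R^B$. For all $X\subseteq B$ and $Y\subseteq A$, $$(\chi_X)^{\uparrow_N}=\chi_{X^{\uparrow_N}}\qquad\text{and}\qquad (\chi_Y)^{\downarrow^N}=\chi_{Y^{\downarrow^N}},$$ where on the left the fuzzy necessity operators are applied and on the right the crisp ones.
   Context: Adjoint triple: for posets $(P_1,\le_1),(P_2,\le_2),(P_3,\le_3)$, maps $\&\colon P_1\times P_2\to P_3$, $\swarrow\colon P_3\times P_2\to P_1$, $\nwarrow\colon P_3\times P_1\to P_2$ with $x\le_1 z\swarrow y \iff x\,\&\,y\le_3 z \iff y\le_2 z\nwarrow x$ for all $x,y,z$. For lower-bounded posets, $\&$ has zero-divisors if there are $x\ne\bot_1$, $y\neq\bot_2$ with $x\,\&\,y=\bot_3$. Standing setting: $(L_1,\preceq_1,\bot_1,\top_1)$ and $(L_2,\preceq_2,\bot_2,\top_2)$ are complete lattices and $(P,\le,\bot,\top)$ is a bounded poset. A multi-adjoint frame consists of adjoint triples $(\&_i,\swarrow^i,\nwarrow_i)$, $i=1,\dots,n$, with respect to $L_1,L_2,P$; a property-oriented frame consists of adjoint triples $(\&^p_j,\swarrow_p^j,\nwarrow^p_j)$, $j=1,\dots,m$, with respect to $P,L_2,L_1$; an object-oriented frame consists of adjoint triples $(\&^o_k,\swarrow_o^k,\nwarrow^o_k)$, $k=1,\dots,s$, with respect to $L_1,P,L_2$. All conjunctors $\&_i,\&^p_j,\&^o_k$ have no zero-divisors. A context $(A,B,R,\sigma)$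 consists of non-empty sets $A,B$, $R\colon A\times B\to P$, and maps $\sigma,\sigma_p,\sigma_o$ from $A\times B$ to the index sets of the three frames. Fuzzy necessity operators: $g^{\uparrow_N}(a)=\inf\{g(b)\swarrow_o^{\sigma_o(a,b)}R(a,b)\mid b\in B\}$ for $g\in L_2^B$, and $f^{\downarrow^N}(b)=\inf\{f(a)\nwarrow^p_{\sigma_p(a,b)}R(a,b)\mid a\in A\}$ for $f\in L_1^A$. Associated Boolean context $(A,B,R^B)$: $R^B(a,b)=1$ if $R(a,b)\ne\bot$ and $0$ otherwise. Crisp necessity operators: for $X\subseteq B$, $X^{\uparrow_N}=\{a\in A\mid \forall b\in B,\ R^B(a,b)=1\Rightarrow b\in X\}$; for $Y\subseteq A$, $Y^{\downarrow^N}=\{b\in B\mid\forall a\in A,\ R^B(a,b)=1\Rightarrow a\in Y\}$. For $X\subseteq B$, $\chi_X\in L_2^B$ takes value $\top_2$ on $X$ and $\bot_2$ elsewhere; for $Y\subseteq A$, $\chi_Y\in L_1^A$ takes value $\top_1$ on $Y$ and $\bot_1$ elsewhere. *)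

(* Defs.v *)
From Stdlib Require Import ClassicalEpsilon.
From mathcomp Require Import ssreflect ssrfun ssrbool eqtype ssrnat fintype.

Set Implicit Arguments.
Unset Strict Implicit.

(* A complete lattice: a partial order in which every subset has an infimum
   (hence also every supremum).  Bottom = inf of everything, top = inf of the
   empty set. *)
Record CompleteLattice := {
  cl_car :> Type;
  cl_le : cl_car -> cl_car -> Prop;
  cl_refl : forall x, cl_le x x;
  cl_antisym : forall x y, cl_le x y -> cl_le y x -> x = y;
  cl_trans : forall x y z, cl_le x y -> cl_le y z -> cl_le x z;
  cl_inf : (cl_car -> Prop) -> cl_car;
  cl_inf_lb : forall (S : cl_car -> Prop) x, S x -> cl_le (cl_inf S) x;
  cl_inf_glb : forall (S : cl_car -> Prop) y,
      (forall x, S x -> cl_le y x) -> cl_le y (cl_inf S)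
}.

Definition cl_bot (L : CompleteLattice) : L := @cl_inf L (fun _ => True).
Definition cl_top (L : CompleteLattice) : L := @cl_inf L (fun _ => False).

Record BoundedPoset := {
  bp_car :> Type;
  bp_le : bp_car -> bp_car -> Prop;
  bp_refl : forall x, bp_le x x;
  bp_antisym : forall x y, bp_le x y -> bp_le y x -> x = y;
  bp_trans : forall x y z, bp_le x y -> bp_le y z -> bp_le x z;
  bp_bot : bp_car;
  bp_top : bp_car;
  bp_bot_least : forall x, bp_le bp_bot x;
  bp_top_greatest : forall x, bp_le x bp_top
}.

(* Adjoint triple w.r.t. posets (P1,le1), (P2,le2), (P3,le3):
   conj : P1 -> P2 -> P3, lres (swarrow) : P3 -> P2 -> P1,
   rres (nwarrow) : P3 -> P1 -> P2. *)
Definition adjoint_triple (P1 P2 P3 : Type)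
  (le1 : P1 -> P1 -> Prop) (le2 : P2 -> P2 -> Prop) (le3 : P3 -> P3 -> Prop)
  (conj : P1 -> P2 -> P3) (lres : P3 -> P2 -> P1) (rres : P3 -> P1 -> P2) : Prop :=
  forall x y z,
    (le1 x (lres z y) <-> le3 (conj x y) z) /\
    (le3 (conj x y) z <-> le2 y (rres z x)).

Definition no_zero_divisors (P1 P2 P3 : Type) (bot1 : P1) (bot2 : P2) (bot3 : P3)
  (conj : P1 -> P2 -> P3) : Prop :=
  forall x y, x <> bot1 -> y <> bot2 -> conj x y <> bot3.

(* Fuzzy necessity operators.
   lres_o k : L2 -> P -> L1 (object-oriented implications swarrow_o^k),
   rres_p j : L1 -> P -> L2 (property-oriented implications nwarrow^p_j). *)
Definition fuzzy_up_N (L1 L2 : CompleteLattice) (P : BoundedPoset)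
  (A B : Type) (s : nat) (R : A -> B -> P) (sigma_o : A -> B -> 'I_s)
  (lres_o : 'I_s -> L2 -> P -> L1) (g : B -> L2) : A -> L1 :=
  fun a => @cl_inf L1 (fun x => exists b, x = lres_o (sigma_o a b) (g b) (R a b)).

Definition fuzzy_down_N (L1 L2 : CompleteLattice) (P : BoundedPoset)
  (A B : Type) (m : nat) (R : A -> B -> P) (sigma_p : A -> B -> 'I_m)
  (rres_p : 'I_m -> L1 -> P -> L2) (f : A -> L1) : B -> L2 :=
  fun b => @cl_inf L2 (fun y => exists a, y = rres_p (sigma_p a b) (f a) (R a b)).

Definition RB (P : BoundedPoset) (A B : Type) (R : A -> B -> P) (a : A) (b : B) : bool :=
  if excluded_middle_informative (R a b <> bp_bot P) then true else false.

Definition crisp_up_N (P : BoundedPoset) (A B : Type) (R : A -> B -> P)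
  (X : B -> Prop) : A -> Prop :=
  fun a => forall b, RB R a b = true -> X b.

Definition crisp_down_N (P : BoundedPoset) (A B : Type) (R : A -> B -> P)
  (Y : A -> Prop) : B -> Prop :=
  fun b => forall a, RB R a b = true -> Y a.

Definition chi (L : CompleteLattice) (T : Type) (X : T -> Prop) : T -> L :=
  fun t => if excluded_middle_informative (X t) then cl_top L else cl_bot L.

(* Main.v *)
Require Import Defs.
From Stdlib Require Import Classical ClassicalEpsilon FunctionalExtensionality.
From mathcomp Require Import ssreflect ssrfun ssrbool eqtype ssrnat fintype.


Lemma bot_le (L : CompleteLattice) (x : L) : cl_le (cl_bot L) x.
Proof. by apply: cl_inf_lb. Qed.

Lemma le_top (L : CompleteLattice) (x : L) : cl_le x (cl_top L).
Proof. by apply: cl_inf_glb. Qed.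

Lemma inf_all_top (L : CompleteLattice) (S : L -> Prop) :
  (forall x, S x -> x = cl_top L) -> cl_inf S = cl_top L.
Proof.
move=> H; apply: cl_antisym; first exact: le_top.
apply: cl_inf_glb => x Sx; rewrite (H x Sx); exact: cl_refl.
Qed.

Lemma inf_has_bot (L : CompleteLattice) (S : L -> Prop) :
  S (cl_bot L) -> cl_inf S = cl_bot L.
Proof.
move=> H; apply: cl_antisym; last exact: bot_le.
exact: cl_inf_lb.
Qed.

Lemma RB_true (P : BoundedPoset) (A B : Type) (R : A -> B -> P) a b :
  RB R a b = true <-> R a b <> bp_bot P.
Proof.
rewrite /RB; case: excluded_middle_informative => H; split => //.
Qed.

Theorem mainTheorem3
  (L1 L2 : CompleteLattice) (P : BoundedPoset)
  (* multi-adjoint frame: adjoint triples w.r.t. L1, L2, P *)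
  (n : nat) (conj : 'I_n -> L1 -> L2 -> P)
  (lres : 'I_n -> P -> L2 -> L1) (rres : 'I_n -> P -> L1 -> L2)
  (Hadj : forall i, adjoint_triple (@cl_le L1) (@cl_le L2) (@bp_le P)
                      (conj i) (lres i) (rres i))
  (Hnz : forall i, no_zero_divisors (cl_bot L1) (cl_bot L2) (bp_bot P) (conj i))
  (* property-oriented frame: adjoint triples w.r.t. P, L2, L1 *)
  (m : nat) (conj_p : 'I_m -> P -> L2 -> L1)
  (lres_p : 'I_m -> L1 -> L2 -> P) (rres_p : 'I_m -> L1 -> P -> L2)
  (Hadj_p : forall j, adjoint_triple (@bp_le P) (@cl_le L2) (@cl_le L1)
                        (conj_p j) (lres_p j) (rres_p j))
  (Hnz_p : forall j, no_zero_divisors (bp_bot P) (cl_bot L2) (cl_bot L1) (conj_p j))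
  (* object-oriented frame: adjoint triples w.r.t. L1, P, L2 *)
  (s : nat) (conj_o : 'I_s -> L1 -> P -> L2)
  (lres_o : 'I_s -> L2 -> P -> L1) (rres_o : 'I_s -> L2 -> L1 -> P)
  (Hadj_o : forall k, adjoint_triple (@cl_le L1) (@bp_le P) (@cl_le L2)
                        (conj_o k) (lres_o k) (rres_o k))
  (Hnz_o : forall k, no_zero_divisors (cl_bot L1) (bp_bot P) (cl_bot L2) (conj_o k))
  (* context (A, B, R, sigma) *)
  (A B : Type) (hA : inhabited A) (hB : inhabited B) (R : A -> B -> P)
  (sigma : A -> B -> 'I_n) (sigma_p : A -> B -> 'I_m) (sigma_o : A -> B -> 'I_s)
  (X : B -> Prop) (Y : A -> Prop) :
  fuzzy_up_N R sigma_o lres_o (chi L2 X) = chi L1 (crisp_up_N R X) /\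
  fuzzy_down_N R sigma_p rres_p (chi L1 Y) = chi L2 (crisp_down_N R Y).
Proof.
split.
- apply: functional_extensionality_dep_good => a.
  rewrite /fuzzy_up_N /chi.
  case: excluded_middle_informative => Hc.
  + apply: inf_all_top => x [b ->].
    set k := sigma_o a b.
    case: excluded_middle_informative => HX.
    * apply: cl_antisym; first exact: le_top.
      apply/(proj1 (Hadj_o k _ _ _)); exact: le_top.
    * have HR : R a b = bp_bot P.
        apply: NNPP => HR; apply: HX; apply: Hc; exact/RB_true.
      rewrite HR; apply: cl_antisym; first exact: le_top.
      apply/(proj1 (Hadj_o k _ _ _)); apply/(proj2 (Hadj_o k _ _ _)).
      exact: bp_bot_least.
  + have [b Hb] : exists b, RB R a b = true /\ ~ X b.
      apply: NNPP => H; apply: Hc => b Hb; apply: NNPP => HX; apply: H; by exists b.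
    case: Hb => /RB_true HR HX.
    apply: inf_has_bot; exists b.
    destruct (excluded_middle_informative (X b)); first by []; simpl.
    set k := sigma_o a b.
    apply: NNPP => Hne.
    have Hle : cl_le (conj_o k (lres_o k (cl_bot L2) (R a b)) (R a b)) (cl_bot L2).
      apply/(proj1 (Hadj_o k _ _ _)); exact: cl_refl.
    have Heq := cl_antisym Hle (bot_le _ _).
    by apply: (Hnz_o k _ _ (fun e => Hne (esym e)) HR).
- apply: functional_extensionality_dep_good => b.
  rewrite /fuzzy_down_N /chi.
  case: excluded_middle_informative => Hc.
  + apply: inf_all_top => x [a ->].
    set k := sigma_p a b.
    case: excluded_middle_informative => HY.
    * apply: cl_antisym; first exact: le_top.
      apply/(proj2 (Hadj_p k _ _ _)); exact: le_top.
    * have HR : R a b = bp_bot P.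
        apply: NNPP => HR; apply: HY; apply: Hc; exact/RB_true.
      rewrite HR; apply: cl_antisym; first exact: le_top.
      apply/(proj2 (Hadj_p k _ _ _)); apply/(proj1 (Hadj_p k _ _ _)).
      exact: bp_bot_least.
  + have [a Ha] : exists a, RB R a b = true /\ ~ Y a.
      apply: NNPP => H; apply: Hc => a Ha; apply: NNPP => HY; apply: H; by exists a.
    case: Ha => /RB_true HR HY.
    apply: inf_has_bot; exists a.
    destruct (excluded_middle_informative (Y a)); first by []; simpl.
    set k := sigma_p a b.
    apply: NNPP => Hne.
    have Hle : cl_le (conj_p k (R a b) (rres_p k (cl_bot L1) (R a b))) (cl_bot L1).
      apply/(proj2 (Hadj_p k _ _ _)); exact: cl_refl.
    have Heq := cl_antisym Hle (bot_le _ _).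
    by apply: (Hnz_p k _ _ HR (fun e => Hne (esym e))).
Qed.
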